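(* Let $G$ be a compact topological group acting continuously and strongly transitively by type-preserving automorphisms on a thick spherical building $\Delta$. Then $\Delta$ is finite.
   Context: The action of $G$ on $\Delta$ is called continuous if the stabilizer in $G$ of every residue of $\Delta$ is a closed subgroup of $G$. Strongly transitive means $G$ acts transitively on pairs $(\Sigma,C)$ consisting of an apartment $\Sigma$ and a chamber $C\in\Sigma$. *)

(* Defs.v *)
From Stdlib Require Import List Arith.
Import ListNotations.
Set Implicit Arguments.

Definition is_group {T : Type} (mul : T -> T -> T) (one : T) (inv : T -> T) : Prop :=
  (forall x y z, mul x (mul y z) = mul (mul x y) z) /\
  (forall x, mul one x = x) /\ (forall x, mul x one = x) /\
  (forall x, mul (inv x) x = one) /\ (forall x, mul x (inv x) = one).

Fixpoint gpow {T : Type} (mul : T -> T -> T) (one : T) (x : T) (n : nat) : T :=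
  match n with O => one | S k => mul x (gpow mul one x k) end.

Definition word_prod {T : Type} (mul : T -> T -> T) (one : T) (l : list T) : T :=
  fold_right mul one l.

(* ---------- Coxeter systems (W,S) via the universal property of the
   Coxeter presentation <S | s^2, (st)^{m(s,t)}> ---------- *)
Record CoxeterSystem := {
  cW :> Type;
  cmul : cW -> cW -> cW;
  cone : cW;
  cinv : cW -> cW;
  cS : cW -> Prop;
  c_group : is_group cmul cone cinv;
  c_invol : forall s, cS s -> s <> cone /\ cmul s s = cone;
  c_gen : forall w, exists l, Forall cS l /\ word_prod cmul cone l = w;
  c_presentation :
    forall (H : Type) (hm : H -> H -> H) (h1 : H) (hi : H -> H),
      is_group hm h1 hi ->
      forall f : cW -> H,
        (forall s, cS s -> hm (f s) (f s) = h1) ->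
        (forall s t n, cS s -> cS t -> gpow cmul cone (cmul s t) n = cone ->
           gpow hm h1 (hm (f s) (f t)) n = h1) ->
        exists phi : cW -> H,
          (forall x y, phi (cmul x y) = hm (phi x) (phi y)) /\
          (forall s, cS s -> phi s = f s)
}.

Section Cox.
Variable W : CoxeterSystem.

Definition has_length (w : W) (n : nat) : Prop :=
  (exists l, Forall (cS W) l /\ length l = n /\ word_prod (cmul W) (cone W) l = w) /\
  (forall l, Forall (cS W) l -> word_prod (cmul W) (cone W) l = w -> n <= length l).

Definition spherical : Prop := exists l : list W, forall w, In w l.

Definition in_parabolic (J : W -> Prop) (w : W) : Prop :=
  exists l, Forall J l /\ word_prod (cmul W) (cone W) l = w.

(* W-metric building (Abramenko-Brown, Def. 5.1) *)
Definition is_building (Ch : Type) (delta : Ch -> Ch -> W) : Prop :=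
  (exists c : Ch, True) /\
  (forall C D, delta C D = cone W <-> C = D) /\
  (forall C D C' s, cS W s -> delta C' C = s ->
     (delta C' D = cmul W s (delta C D) \/ delta C' D = delta C D) /\
     ((exists n, has_length (delta C D) n /\
                 has_length (cmul W s (delta C D)) (S n)) ->
        delta C' D = cmul W s (delta C D))) /\
  (forall C D s, cS W s ->
     exists C', delta C' C = s /\ delta C' D = cmul W s (delta C D)).

(* thick: every panel contains at least three chambers *)
Definition thick (Ch : Type) (delta : Ch -> Ch -> W) : Prop :=
  forall (c : Ch) s, cS W s ->
    exists d1 d2, delta c d1 = s /\ delta c d2 = s /\ d1 <> d2.

Definition apartment (Ch : Type) (delta : Ch -> Ch -> W) (A : Ch -> Prop) : Prop :=
  exists f : W -> Ch,
    (forall x y, delta (f x) (f y) = cmul W (cinv W x) y) /\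
    (forall c, A c <-> exists w, f w = c).

Definition residue (Ch : Type) (delta : Ch -> Ch -> W) (J : W -> Prop) (c : Ch)
  : Ch -> Prop := fun d => in_parabolic J (delta c d).

Definition is_residue (Ch : Type) (delta : Ch -> Ch -> W) (R : Ch -> Prop) : Prop :=
  exists (J : W -> Prop) (c : Ch), (forall s, J s -> cS W s) /\
    (forall d, R d <-> residue delta J c d).
End Cox.

Record TopGroup := {
  tG :> Type;
  tmul : tG -> tG -> tG;
  tone : tG;
  tinv : tG -> tG;
  topen : (tG -> Prop) -> Prop;
  t_group : is_group tmul tone tinv;
  t_open_full : topen (fun _ => True);
  t_open_inter : forall U V, topen U -> topen V -> topen (fun x => U x /\ V x);
  t_open_union : forall (I : Type) (U : I -> tG -> Prop),
      (forall i, topen (U i)) -> topen (fun x => exists i, U i x);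
  (* multiplication G x G -> G continuous for the product topology *)
  t_mul_cont : forall U x y, topen U -> U (tmul x y) ->
      exists A B, topen A /\ topen B /\ A x /\ B y /\
        (forall a b, A a -> B b -> U (tmul a b));
  t_inv_cont : forall U, topen U -> topen (fun x => U (tinv x))
}.

Definition tclosed (G : TopGroup) (F : G -> Prop) : Prop :=
  topen G (fun x => ~ F x).

Definition compact (G : TopGroup) : Prop :=
  forall (I : Type) (U : I -> G -> Prop),
    (forall i, topen G (U i)) -> (forall x, exists i, U i x) ->
    exists l : list I, forall x, exists i, In i l /\ U i x.

Section Act.
Variables (G : TopGroup) (W : CoxeterSystem) (Ch : Type) (delta : Ch -> Ch -> W)
          (act : G -> Ch -> Ch).

Definition type_preserving_action : Prop :=
  (forall c, act (tone G) c = c) /\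
  (forall g h c, act (tmul G g h) c = act g (act h c)) /\
  (forall g c d, delta (act g c) (act g d) = delta c d).

Definition maps_set (g : G) (X Y : Ch -> Prop) : Prop :=
  forall y, Y y <-> exists x, X x /\ act g x = y.

Definition continuous_action : Prop :=
  forall R, @is_residue W Ch delta R -> @tclosed G (fun g => maps_set g R R).

Definition strongly_transitive : Prop :=
  forall A A' c c', @apartment W Ch delta A -> @apartment W Ch delta A' -> A c -> A' c' ->
    exists g, maps_set g A A' /\ act g c = c'.
End Act.

(* Main.v *)
Require Import Defs.
From Stdlib Require Import List.
From Stdlib Require Import Arith Lia Bool.
From Stdlib Require Import ClassicalEpsilon Classical FunctionalExtensionality PropExtensionality ProofIrrelevance.
Import ListNotations.

Section Grp.
Variables (T : Type) (mul : T -> T -> T) (one : T) (inv : T -> T).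
Hypothesis Hg : is_group mul one inv.

Lemma g_assoc x y z : mul x (mul y z) = mul (mul x y) z.
Proof. apply Hg. Qed.
Lemma g_1l x : mul one x = x. Proof. apply Hg. Qed.
Lemma g_1r x : mul x one = x. Proof. apply Hg. Qed.
Lemma g_vl x : mul (inv x) x = one. Proof. apply Hg. Qed.
Lemma g_vr x : mul x (inv x) = one. Proof. apply Hg. Qed.

Lemma g_cancl x y z : mul x y = mul x z -> y = z.
Proof. intro H. rewrite <- (g_1l y), <- (g_1l z), <- (g_vl x), <- !g_assoc, H. reflexivity. Qed.
Lemma g_cancr x y z : mul y x = mul z x -> y = z.
Proof. intro H. rewrite <- (g_1r y), <- (g_1r z), <- (g_vr x), !g_assoc, H. reflexivity. Qed.
Lemma g_Kl x y : mul (inv x) (mul x y) = y.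
Proof. rewrite g_assoc, g_vl, g_1l. reflexivity. Qed.
Lemma g_Kr x y : mul x (mul (inv x) y) = y.
Proof. rewrite g_assoc, g_vr, g_1l. reflexivity. Qed.
Lemma g_inv_uniq x y : mul x y = one -> inv x = y.
Proof. intro H. apply (g_cancl x). rewrite g_vr, H. reflexivity. Qed.
Lemma g_inv_uniq' x y : mul y x = one -> inv x = y.
Proof. intro H. apply (g_cancr x). rewrite g_vl, H. reflexivity. Qed.
Lemma g_invK x : inv (inv x) = x.
Proof. apply g_inv_uniq. apply g_vl. Qed.
Lemma g_inv1 : inv one = one.
Proof. apply g_inv_uniq. apply g_1l. Qed.
Lemma g_invM x y : inv (mul x y) = mul (inv y) (inv x).
Proof. apply g_inv_uniq. rewrite g_assoc, <- (g_assoc x y), g_vr, g_1r, g_vr. reflexivity. Qed.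
Lemma g_idem x : mul x x = x -> x = one.
Proof. intro H. apply (g_cancl x). rewrite H, g_1r. reflexivity. Qed.
Lemma g_eq1 x y : mul (inv x) y = one -> x = y.
Proof. intro H. apply (g_cancl (inv x)). rewrite H, g_vl. reflexivity. Qed.
Lemma g_invol_inv x : mul x x = one -> inv x = x.
Proof. apply g_inv_uniq. Qed.

Lemma gpow_add x m n : gpow mul one x (m + n) = mul (gpow mul one x m) (gpow mul one x n).
Proof. induction m; simpl. rewrite g_1l; auto. rewrite IHm, g_assoc. auto. Qed.
Lemma gpow_S' x n : gpow mul one x (S n) = mul (gpow mul one x n) x.
Proof. replace (S n) with (n + 1) by lia. rewrite gpow_add. simpl. rewrite g_1r. auto. Qed.

Lemma word_prod_app l1 l2 : word_prod mul one (l1 ++ l2) = mul (word_prod mul one l1) (word_prod mul one l2).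
Proof. induction l1; simpl. rewrite g_1l; auto. rewrite IHl1, g_assoc; auto. Qed.
End Grp.
Arguments g_assoc {T mul one inv} Hg x y z.
Arguments g_1l {T mul one inv} Hg x.
Arguments g_1r {T mul one inv} Hg x.
Arguments g_vl {T mul one inv} Hg x.
Arguments g_vr {T mul one inv} Hg x.
Arguments g_cancl {T mul one inv} Hg x y z.
Arguments g_cancr {T mul one inv} Hg x y z.
Arguments g_Kl {T mul one inv} Hg x y.
Arguments g_Kr {T mul one inv} Hg x y.
Arguments g_inv_uniq {T mul one inv} Hg x y.
Arguments g_inv_uniq' {T mul one inv} Hg x y.
Arguments g_invK {T mul one inv} Hg x.
Arguments g_inv1 {T mul one inv} Hg.
Arguments g_invM {T mul one inv} Hg x y.
Arguments g_idem {T mul one inv} Hg x.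
Arguments g_eq1 {T mul one inv} Hg x y.
Arguments g_invol_inv {T mul one inv} Hg x.
Arguments gpow_add {T mul one inv} Hg x m n.
Arguments gpow_S' {T mul one inv} Hg x n.
Arguments word_prod_app {T mul one inv} Hg l1 l2.


Section Cox1.
Variable W : CoxeterSystem.
Local Notation "x ** y" := (cmul W x y) (at level 40, left associativity).
Local Notation e := (cone W).
Local Notation iv := (cinv W).
Local Notation S_ := (cS W).
Local Notation wp := (word_prod (cmul W) (cone W)).
Let HW := c_group W.

Lemma s_inv s : S_ s -> iv s = s.
Proof. intro H. apply (g_invol_inv HW). apply (c_invol W s H). Qed.
Lemma s_ss s : S_ s -> s ** s = e.
Proof. intro H. apply (c_invol W s H). Qed.
Lemma s_ne1 s : S_ s -> s <> e.
Proof. intro H. apply (c_invol W s H). Qed.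

Lemma wp_rev l : Forall S_ l -> iv (wp l) = wp (rev l).
Proof.
  induction l; simpl; intro F. apply (g_inv1 HW).
  inversion F; subst. rewrite (g_invM HW), IHl by auto.
  rewrite (word_prod_app HW). simpl. rewrite (g_1r HW), s_inv; auto.
Qed.

Lemma len_ex w : exists n, has_length W w n.
Proof.
  destruct (c_gen W w) as [l [F E]].
  assert (forall k, (exists l, Forall S_ l /\ wp l = w /\ length l = k) -> exists n, has_length W w n).
  { induction k as [k IH] using lt_wf_ind. intros [l0 [F0 [E0 L0]]].
    destruct (classic (exists l, Forall S_ l /\ wp l = w /\ length l < k)) as [[l1 [F1 [E1 L1]]]|N].
    - apply (IH (length l1)); eauto.
    - exists k. split. exists l0; auto.
      intros l1 F1 E1. destruct (le_lt_dec k (length l1)); auto. exfalso; apply N; eauto. }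
  eauto.
Qed.

Definition len (w : W) : nat := proj1_sig (constructive_indefinite_description _ (len_ex w)).
Lemma len_spec w : has_length W w (len w).
Proof. unfold len. destruct (constructive_indefinite_description _ _). auto. Qed.
Lemma len_le l : Forall S_ l -> len (wp l) <= length l.
Proof. intro F. apply (proj2 (len_spec (wp l))); auto. Qed.
Lemma len_word w : exists l, Forall S_ l /\ length l = len w /\ wp l = w.
Proof. apply (proj1 (len_spec w)). Qed.
Lemma has_length_len w n : has_length W w n -> n = len w.
Proof.
  intros [[l [F [L E]]] M]. destruct (len_word w) as [l' [F' [L' E']]].
  apply Nat.le_antisymm. rewrite <- L'. apply M; auto. rewrite <- L, <- E. apply len_le; auto.
Qed.
Lemma len_has w n : n = len w -> has_length W w n.
Proof. intros ->; apply len_spec. Qed.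

Definition reduced (l : list W) := Forall S_ l /\ len (wp l) = length l.

Lemma len_inv w : len (iv w) = len w.
Proof.
  destruct (len_word w) as [l [F [L E]]]. destruct (len_word (iv w)) as [l' [F' [L' E']]].
  apply Nat.le_antisymm.
  - rewrite <- L, <- E, wp_rev by auto. rewrite <- (length_rev l). apply len_le. apply Forall_rev; auto.
  - rewrite <- L'. assert (w = iv (iv w)) by (symmetry; apply (g_invK HW)).
    rewrite H, <- E', wp_rev by auto. rewrite <- (length_rev l'). apply len_le. apply Forall_rev; auto.
Qed.

Lemma len_1 : len e = 0.
Proof. assert (len (wp []) <= 0) by (apply len_le; auto). simpl in H. lia. Qed.
Lemma len_0 w : len w = 0 -> w = e.
Proof. intro H. destruct (len_word w) as [l [F [L E]]]. destruct l; simpl in *; try lia. auto. Qed.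

Lemma len_s s : S_ s -> len s = 1.
Proof.
  intro H. assert (len (wp [s]) <= 1) by (apply len_le; auto).
  simpl in H0. rewrite (g_1r HW) in H0. destruct (len s) eqn:E; try lia.
  apply len_0 in E. exfalso. apply (s_ne1 s H E).
Qed.

Lemma len_mul w v : len (w ** v) <= len w + len v.
Proof.
  destruct (len_word w) as [l [F [L E]]]. destruct (len_word v) as [l' [F' [L' E']]].
  rewrite <- L, <- L', <- E, <- E', <- (word_prod_app HW), <- length_app. apply len_le.
  apply Forall_app; auto.
Qed.

Lemma len_ws w s : S_ s -> len (w ** s) <= S (len w) /\ len w <= S (len (w ** s)).
Proof.
  intro H. split. pose proof (len_mul w s). rewrite (len_s s H) in H0; lia.
  pose proof (len_mul (w ** s) s). rewrite (len_s s H) in H0.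
  rewrite <- (g_assoc HW), s_ss, (g_1r HW) in H0; auto; lia.
Qed.
Lemma len_sw w s : S_ s -> len (s ** w) <= S (len w) /\ len w <= S (len (s ** w)).
Proof.
  intro H. split. pose proof (len_mul s w). rewrite (len_s s H) in H0; lia.
  pose proof (len_mul s (s ** w)). rewrite (len_s s H) in H0.
  rewrite (g_assoc HW), s_ss, (g_1l HW) in H0; auto; lia.
Qed.

Lemma reduced_app l1 l2 : reduced (l1 ++ l2) -> reduced l1 /\ reduced l2.
Proof.
  intros [F L]. apply Forall_app in F as [F1 F2]. rewrite (word_prod_app HW), length_app in L.
  pose proof (len_le l1 F1). pose proof (len_le l2 F2). pose proof (len_mul (wp l1) (wp l2)).
  split; split; auto; lia.
Qed.

Lemma reduced_word w : exists l, reduced l /\ wp l = w.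
Proof. destruct (len_word w) as [l [F [L E]]]. exists l. split; auto. split; auto. rewrite E; auto. Qed.

End Cox1.


Record perm (X : Type) := mkP { pf : X -> X; pg : X -> X;
  pfg : forall x, pf (pg x) = x; pgf : forall x, pg (pf x) = x }.
Arguments mkP {X} pf pg pfg pgf.
Arguments pf {X} p x.
Arguments pg {X} p x.
Arguments pfg {X} p x.
Arguments pgf {X} p x.

Lemma perm_ext X (p q : perm X) : (forall x, pf p x = pf q x) -> p = q.
Proof.
  intro H. assert (Hf : pf p = pf q) by (apply functional_extensionality; auto).
  assert (Hg : pg p = pg q).
  { apply functional_extensionality. intro x. rewrite <- (pfg q x) at 1.
    rewrite <- Hf. apply pgf. }
  destruct p as [f g a b], q as [f' g' a' b']. simpl in *. subst.
  f_equal; apply proof_irrelevance.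
Qed.

Definition pcomp X (p q : perm X) : perm X.
Proof.
  refine (mkP (fun x => pf p (pf q x)) (fun x => pg q (pg p x)) _ _).
  - intro x. rewrite pfg, pfg. auto.
  - intro x. rewrite pgf, pgf. auto.
Defined.
Arguments pcomp {X} p q.
Definition pid X : perm X := mkP (fun x => x) (fun x => x) (fun x => eq_refl) (fun x => eq_refl).
Definition pinv X (p : perm X) : perm X := mkP (pg p) (pf p) (pgf p) (pfg p).

Arguments pinv {X} p.
Lemma perm_group X : is_group (@pcomp X) (@pid X) (@pinv X).
Proof.
  repeat split; intros; apply perm_ext; intros; simpl; auto.
  apply pgf. apply pfg.
Qed.

Definition eqbW {W : Type} (x y : W) : bool :=
  if excluded_middle_informative (x = y) then true else false.
Lemma eqbW_true {W : Type} (x y : W) : eqbW x y = true <-> x = y.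
Proof. unfold eqbW. destruct (excluded_middle_informative (x = y)); split; auto; discriminate. Qed.
Lemma eqbW_iff {W : Type} (x y x' y' : W) : (x = y <-> x' = y') -> eqbW x y = eqbW x' y'.
Proof.
  intro H. unfold eqbW. destruct (excluded_middle_informative (x = y)), (excluded_middle_informative (x' = y')); auto; tauto.
Qed.

Section Cox2.
Variable W : CoxeterSystem.
Local Notation "x ** y" := (cmul W x y) (at level 40, left associativity).
Local Notation e := (cone W).
Local Notation iv := (cinv W).
Local Notation S_ := (cS W).
Local Notation wp := (word_prod (cmul W) (cone W)).
Local Notation HW := (c_group W).
Local Notation X := (cW W * bool)%type.

Definition pis (s : W) : perm X.
Proof.
  refine (mkP (fun z => (s ** fst z ** iv s, xorb (snd z) (eqbW (fst z) s)))
              (fun z => (iv s ** fst z ** s, xorb (snd z) (eqbW (iv s ** fst z ** s) s))) _ _).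
  - intros [w b]; simpl. f_equal.
    + rewrite <- !(g_assoc HW), (g_vr HW), (g_1r HW), !(g_assoc HW), (g_vr HW), (g_1l HW). auto.
    + rewrite xorb_assoc, xorb_nilpotent, xorb_false_r. auto.
  - intros [w b]; simpl. f_equal.
    + rewrite <- !(g_assoc HW), (g_vl HW), (g_1r HW), !(g_assoc HW), (g_vl HW), (g_1l HW). auto.
    + replace (iv s ** (s ** w ** iv s) ** s) with w.
      rewrite xorb_assoc, xorb_nilpotent, xorb_false_r. auto.
      rewrite <- !(g_assoc HW), (g_vl HW), (g_1r HW), !(g_assoc HW), (g_vl HW), (g_1l HW). auto.
Defined.

Lemma pis_inv s : S_ s -> pcomp (pis s) (pis s) = pid X.
Proof.
  intro H. apply perm_ext. intros [w b]. simpl. rewrite (s_inv W s H).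
  f_equal.
  - rewrite <- !(g_assoc HW), (s_ss W s H), (g_1r HW), !(g_assoc HW), (s_ss W s H), (g_1l HW). auto.
  - replace (eqbW (s ** w ** s) s) with (eqbW w s).
    rewrite xorb_assoc, xorb_nilpotent, xorb_false_r. auto.
    apply eqbW_iff. split; intro E. subst. rewrite <- (g_assoc HW), (s_ss W s H), (g_1r HW). auto.
    apply (g_cancl HW s). apply (g_cancr HW s). rewrite E, (s_ss W s H), (g_1l HW). auto.
Qed.

Fixpoint Gx (rho : nat -> W) (w : W) (m : nat) : bool :=
  match m with O => false | S m' => xorb (Gx rho w m') (eqbW w (rho m')) end.

Lemma Gx_shift rho w n m : (forall j, rho (n + j) = rho j) -> Gx rho w (n + m) = xorb (Gx rho w n) (Gx rho w m).
Proof.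
  intro P. induction m. simpl. rewrite Nat.add_0_r, xorb_false_r. auto.
  rewrite Nat.add_succ_r. simpl. rewrite IHm, P, xorb_assoc. auto.
Qed.

Lemma conj_eq (u w v z : W) : (u ** w ** v = z) <-> (w = iv u ** z ** iv v).
Proof.
  split; intro E. rewrite <- E. rewrite !(g_assoc HW), (g_vl HW), (g_1l HW), <- (g_assoc HW), (g_vr HW), (g_1r HW); auto.
  rewrite E. rewrite !(g_assoc HW), (g_vr HW), (g_1l HW), <- (g_assoc HW), (g_vl HW), (g_1r HW); auto.
Qed.

Section Braid.
Variables s t : W.
Hypothesis Hs : S_ s.
Hypothesis Ht : S_ t.
Local Notation a := (s ** t).
Local Notation b := (t ** s).
Local Notation pw := (gpow (cmul W) e).
Definition rho j := pw b j ** t.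

Lemma ab_inv k : iv (pw a k) = pw b k.
Proof.
  induction k. simpl. apply (g_inv1 HW).
  rewrite (gpow_S' HW b). simpl gpow. rewrite (g_invM HW), IHk. f_equal.
  rewrite (g_invM HW), (s_inv W s Hs), (s_inv W t Ht). auto.
Qed.
Lemma ba_inv k : iv (pw b k) = pw a k.
Proof. rewrite <- ab_inv. apply (g_invK HW). Qed.
Lemma t_a k : t ** pw a k = pw b k ** t.
Proof.
  induction k; simpl. rewrite (g_1l HW), (g_1r HW). auto.
  rewrite <- !(g_assoc HW), IHk, (g_assoc HW). auto.
Qed.

Lemma sigma_pow k w x :
  pf (gpow (@pcomp X) (pid X) (pcomp (pis s) (pis t)) k) (w, x) =
  (pw a k ** w ** pw b k, xorb x (Gx rho w (2 * k))).
Proof.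
  induction k. simpl. rewrite (g_1l HW), (g_1r HW), xorb_false_r. auto.
  change (gpow (@pcomp X) (pid X) (pcomp (pis s) (pis t)) (S k)) with
    (pcomp (pcomp (pis s) (pis t)) (gpow (@pcomp X) (pid X) (pcomp (pis s) (pis t)) k)).
  simpl pf. rewrite IHk. simpl fst. simpl snd. rewrite (s_inv W s Hs), (s_inv W t Ht).
  replace (2 * S k) with (S (S (2 * k))) by lia. simpl Gx. f_equal.
  - rewrite (gpow_S' HW (t ** s) k). simpl gpow. rewrite <- !(g_assoc HW). reflexivity.
  - rewrite !xorb_assoc. f_equal. f_equal. f_equal.
    + apply eqbW_iff. rewrite conj_eq, ba_inv. unfold rho.
      replace (2 * k) with (k + k) by lia. rewrite (gpow_add HW), <- !(g_assoc HW), <- t_a. rewrite ab_inv, Nat.add_0_r. tauto.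
    + apply eqbW_iff. rewrite conj_eq, (s_inv W t Ht), conj_eq, ba_inv. unfold rho.
      replace (S (k + (k + 0))) with (k + (1 + k)) by lia.
      rewrite !(gpow_add HW). simpl gpow. rewrite (g_1r HW), <- !(g_assoc HW), <- t_a. rewrite ab_inv. tauto.
Qed.

Lemma sigma_rel n : pw a n = e ->
  gpow (@pcomp X) (pid X) (pcomp (pis s) (pis t)) n = pid X.
Proof.
  intro H. assert (Hb : pw b n = e) by (rewrite <- ab_inv, H; apply (g_inv1 HW)).
  apply perm_ext. intros [w x]. rewrite sigma_pow, H, Hb, (g_1l HW), (g_1r HW). simpl.
  rewrite Nat.add_0_r, Gx_shift, xorb_nilpotent, xorb_false_r; auto.
  intro j. unfold rho. rewrite (gpow_add HW), Hb, (g_1l HW). auto.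
Qed.
End Braid.

Lemma theta_exists : exists theta : W -> W -> bool,
  (forall u v w, theta (u ** v) w = xorb (theta v w) (theta u (v ** w ** iv v))) /\
  (forall s w, S_ s -> (theta s w = true <-> w = s)) /\
  (forall w, theta e w = false).
Proof.
  destruct (@c_presentation W (perm X) (@pcomp X) (pid X) (@pinv X) (perm_group X) pis)
    as [phi [Hm Hs]].
  - apply pis_inv.
  - intros s t n Hs Ht H. exact (sigma_rel s t Hs Ht n H).
  - assert (P1 : phi e = pid X).
    { apply (g_idem (perm_group X)). rewrite <- Hm. rewrite (g_1l HW). auto. }
    
    assert (Sh : forall v w x, pf (phi v) (w, x) = (v ** w ** iv v, xorb x (snd (pf (phi v) (w, false))))).
    { intro v. destruct (c_gen W v) as [l [F E]]. subst v. induction l; intros w x.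
    - cbn [word_prod fold_right]. rewrite P1. cbn [pf pid fst snd]. rewrite (g_inv1 HW), (g_1l HW), (g_1r HW), xorb_false_r. auto.
      - cbn [word_prod fold_right]. inversion F; subst. rewrite Hm, Hs by auto.
        cbn [pf pcomp pis]. change (fold_right (cmul W) e l) with (wp l). rewrite (IHl H2 w x), (IHl H2 w false). cbn [fst snd].
        f_equal. rewrite (g_invM HW), <- !(g_assoc HW). auto.
        rewrite xorb_assoc. auto. }
    
    exists (fun v w => snd (pf (phi v) (w, false))). repeat split.
    + intros u v w. rewrite Hm. cbn [pf pcomp]. rewrite (Sh v). rewrite Sh. cbn [fst snd]. auto.
    + rewrite Hs by auto. cbn [pf pis fst snd]. apply eqbW_true.
    + rewrite Hs by auto. cbn [pf pis fst snd]. apply eqbW_true.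
    + intro w. rewrite P1. auto.
Qed.
End Cox2.


Section Cox3.
Variable W : CoxeterSystem.
Local Notation "x ** y" := (cmul W x y) (at level 40, left associativity).
Local Notation e := (cone W).
Local Notation iv := (cinv W).
Local Notation S_ := (cS W).
Local Notation wp := (word_prod (cmul W) (cone W)).
Local Notation HW := (c_group W).
Local Notation len := (len W).

Variable theta : W -> W -> bool.
Hypothesis Hco : forall u v w, theta (u ** v) w = xorb (theta v w) (theta u (v ** w ** iv v)).
Hypothesis Hts : forall s w, S_ s -> (theta s w = true <-> w = s).
Hypothesis Ht1 : forall w, theta e w = false.

Definition refl (t : W) := exists u s, S_ s /\ t = u ** s ** iv u.

Lemma theta_del l t : Forall S_ l -> theta (wp l) t = true ->
  exists l1 l2, length l1 + length l2 < length l /\ Forall S_ (l1 ++ l2) /\ wp l ** t = wp (l1 ++ l2).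
Proof.
  induction l as [|a l IH]; intros F H. simpl in H. rewrite Ht1 in H. discriminate.
  inversion F; subst. simpl in H. change (fold_right (cmul W) e l) with (wp l) in H.
  rewrite Hco in H. destruct (theta (wp l) t) eqn:E.
  - destruct (IH H3 eq_refl) as [l1 [l2 [L [F' E']]]]. exists (a :: l1), l2. simpl. split. lia.
    split. constructor; auto. change (fold_right (cmul W) e (l1 ++ l2)) with (wp (l1 ++ l2)).
    rewrite <- E', <- (g_assoc HW). auto.
  - simpl in H. apply Hts in H; auto. exists [], l. simpl. split. lia. split; auto.
    change (fold_right (cmul W) e l) with (wp l).
    rewrite <- (g_assoc HW). apply (f_equal (fun z => z ** wp l)) in H.
    rewrite <- !(g_assoc HW), (g_vl HW), (g_1r HW) in H. rewrite H, (g_assoc HW), (s_ss W a H2), (g_1l HW). auto.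
Qed.

Lemma theta_len w t : theta w t = true -> len (w ** t) < len w.
Proof.
  intro H. destruct (reduced_word W w) as [l [[F L] E]]. subst w.
  destruct (theta_del l t F H) as [l1 [l2 [L' [F' E']]]]. rewrite E'.
  pose proof (len_le W _ F'). rewrite length_app in H0. lia.
Qed.

Lemma refl_sq t : refl t -> t ** t = e.
Proof.
  intros [u [s [Hs ->]]]. rewrite <- !(g_assoc HW), (g_Kl HW), (g_assoc HW s s), (s_ss W s Hs), (g_1l HW), (g_vr HW). auto.
Qed.
Lemma refl_inv t : refl t -> iv t = t.
Proof. intro H. apply (g_invol_inv HW). apply refl_sq; auto. Qed.

Lemma theta_inv u x : theta (iv u) x = theta u (iv u ** x ** u).
Proof.
  pose proof (Hco u (iv u) x). rewrite (g_vr HW), Ht1, (g_invK HW) in H.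
  destruct (theta (iv u) x), (theta u (iv u ** x ** u)); simpl in *; auto.
Qed.

Lemma theta_tt t : refl t -> theta t t = true.
Proof.
  intro R. pose proof R as [u [s [Hs E]]]. rewrite E at 1. rewrite Hco, theta_inv.
  assert (iv u ** t ** u = s) by (rewrite E, <- !(g_assoc HW), (g_Kl HW), (g_vl HW), (g_1r HW); auto).
  rewrite (g_invK HW), H, Hco.
  assert (s ** s ** iv s = s) by (rewrite <- (g_assoc HW), (g_vr HW), (g_1r HW); auto).
  rewrite H0. assert (theta s s = true) by (apply Hts; auto). rewrite H1.
  destruct (theta u s); auto.
Qed.

Lemma theta_len' w t : refl t -> theta w t = false -> len w < len (w ** t).
Proof.
  intros R H. assert (theta (w ** t) t = true).
  { rewrite Hco, theta_tt by auto. rewrite (refl_inv t R), refl_sq, (g_1l HW), H by auto. auto. }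
  apply theta_len in H0. rewrite <- (g_assoc HW), refl_sq, (g_1r HW) in H0 by auto. auto.
Qed.

Lemma refl_s s : S_ s -> refl s.
Proof. intro H. exists e, s. split; auto. rewrite (g_1l HW), (g_inv1 HW), (g_1r HW). auto. Qed.

Lemma len_ws_cases w s : S_ s -> len (w ** s) = S (len w) \/ len w = S (len (w ** s)).
Proof.
  intro H. pose proof (len_ws W w s H). destruct (theta w s) eqn:E.
  - apply theta_len in E. lia.
  - apply theta_len' in E. lia. apply refl_s; auto.
Qed.

Lemma theta_false_of_len w t : len w < len (w ** t) -> theta w t = false.
Proof. intro H. destruct (theta w t) eqn:E; auto. apply theta_len in E. lia. Qed.

Lemma refl_conj u s : S_ s -> refl (u ** s ** iv u).
Proof. intro H. exists u, s. auto. Qed.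

Lemma w0_prefix w0 : (forall w, len w <= len w0) -> forall x, len x + len (iv x ** w0) = len w0.
Proof.
  intros M. assert (T0 : forall t, refl t -> theta (iv w0) t = true).
  { intros t R. destruct (theta (iv w0) t) eqn:E; auto. apply theta_len' in E; auto.
    specialize (M (iv (iv w0 ** t))). rewrite (len_inv W) in M. rewrite (len_inv W) in E. lia. }
  assert (forall n x, len x = n -> len x + len (iv x ** w0) = len w0).
  { induction n; intros x Lx.
    - apply (len_0 W) in Lx. subst x. rewrite (g_inv1 HW), (g_1l HW). auto. rewrite (len_1 W). auto.
    - destruct (reduced_word W x) as [l [[F L] E]].
      destruct l as [|a l0] using rev_ind. rewrite <- E in Lx. simpl in Lx. rewrite (len_1 W) in Lx. lia.
      clear IHl0. pose proof (reduced_app W l0 [a] (conj F L)) as [[F1 L1] [F2 L2]].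
      apply Forall_app in F as [_ Fs]. inversion Fs as [|? ? H1 _]; subst.
      set (x' := wp l0) in *.
      assert (E : wp (l0 ++ [a]) = x' ** a) by (rewrite (word_prod_app HW); simpl; rewrite (g_1r HW); auto).
      rewrite E in *. rewrite length_app in L. simpl in L.
      assert (Lx' : len x' = n) by lia.
      specialize (IHn x' Lx'). set (y := iv x' ** w0) in *.
      assert (Ex : iv (x' ** a) ** w0 = a ** y) by (unfold y; rewrite (g_invM HW), (s_inv W a H1), (g_assoc HW); auto).
      assert (Th : theta (iv y) a = true).
      { unfold y. rewrite (g_invM HW), (g_invK HW), Hco.
        rewrite (theta_false_of_len x' a) by lia.
        rewrite T0. auto. apply refl_conj; auto. }
      apply theta_len in Th. rewrite <- (s_inv W a H1) in Th at 1. rewrite <- (g_invM HW), !(len_inv W) in Th.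
      pose proof (len_sw W y a H1). rewrite Ex. lia. }
  intro x. apply (H (len x)); auto.
Qed.

End Cox3.

Lemma max_in_list (A : Type) (f : A -> nat) (l : list A) (a0 : A) :
  exists m, forall x, In x l -> f x <= f m.
Proof.
  induction l. exists a0. intros x []. destruct IHl as [m Hm].
  destruct (le_lt_dec (f a) (f m)). exists m. intros x [->|H]; auto.
  exists a. intros x [->|H]; auto. specialize (Hm x H). lia.
Qed.

Lemma coxeter_facts (W : CoxeterSystem) : spherical W ->
  (forall w s, cS W s -> len W (cmul W w s) = S (len W w) \/ len W w = S (len W (cmul W w s))) /\
  exists w0, forall x, len W x + len W (cmul W (cinv W x) w0) = len W w0.
Proof.
  intros [lw Hl]. destruct (theta_exists W) as [theta [Hco [Hts Ht1]]]. split.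
  - intros. apply (len_ws_cases W theta); auto.
  - destruct (max_in_list _ (len W) lw (cone W)) as [w0 Hw0]. exists w0.
    apply (w0_prefix W theta); auto.
Qed.


Section Bld.
Variable W : CoxeterSystem.
Local Notation "x ** y" := (cmul W x y) (at level 40, left associativity).
Local Notation e := (cone W).
Local Notation iv := (cinv W).
Local Notation S_ := (cS W).
Local Notation wp := (word_prod (cmul W) (cone W)).
Local Notation HW := (c_group W).
Local Notation len := (len W).
Variables (Ch : Type) (delta : Ch -> Ch -> W).
Hypothesis HB : is_building W delta.

Lemma wd1 C D : delta C D = e <-> C = D.
Proof. apply HB. Qed.
Lemma wd1r C : delta C C = e.
Proof. apply wd1. auto. Qed.
Lemma wd2a C D C' s : S_ s -> delta C' C = s ->
  delta C' D = s ** delta C D \/ delta C' D = delta C D.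
Proof. intros. apply (proj1 (proj2 (proj2 HB)) C D C' s); auto. Qed.
Lemma wd2b C D C' s : S_ s -> delta C' C = s ->
  len (s ** delta C D) = S (len (delta C D)) -> delta C' D = s ** delta C D.
Proof.
  intros. apply (proj1 (proj2 (proj2 HB)) C D C' s); auto.
  exists (len (delta C D)). split; apply len_has; auto.
Qed.
Lemma wd3 C D s : S_ s -> exists C', delta C' C = s /\ delta C' D = s ** delta C D.
Proof. intros. apply (proj2 (proj2 (proj2 HB))); auto. Qed.

Lemma adj_sym C C' s : S_ s -> delta C' C = s -> delta C C' = s.
Proof.
  intros Hs H. destruct (wd2a C C' C' s Hs H) as [E|E]; rewrite wd1r in E.
  - symmetry. rewrite <- (s_inv W s Hs). apply (g_inv_uniq HW). auto.
  - symmetry in E. apply wd1 in E. subst C'. rewrite wd1r in H. exfalso. apply (s_ne1 W s Hs). auto.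
Qed.

Definition adj0 (s : W) (x y : Ch) := delta x y = e \/ delta x y = s.
Lemma adj0_sym s x y : S_ s -> adj0 s x y -> adj0 s y x.
Proof.
  intros Hs [H|H]. left. apply wd1 in H. subst x. apply wd1r. right. apply adj_sym; auto.
Qed.
Lemma adj0_trans s x y z : S_ s -> adj0 s x y -> adj0 s y z -> adj0 s x z.
Proof.
  intros Hs H1 H2. unfold adj0 in *. destruct H1 as [H|H]. apply wd1 in H. subst x. auto.
  destruct (wd2a y z x s Hs H) as [E|E]; rewrite E; destruct H2 as [H2|H2]; rewrite H2.
  right. apply (g_1r HW). left. apply (s_ss W s Hs). left; auto. right; auto.
Qed.

Fixpoint gal (C : Ch) (l : list W) (D : Ch) : Prop :=
  match l with [] => C = D | s :: l' => exists C1, delta C C1 = s /\ gal C1 l' D end.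

Lemma gal_app l1 l2 C D : gal C (l1 ++ l2) D <-> exists E, gal C l1 E /\ gal E l2 D.
Proof.
  revert C. induction l1; intro C; simpl. split. intro; exists C; auto. intros [E [-> H]]; auto.
  split. intros [C1 [H1 H2]]. apply IHl1 in H2 as [E [H3 H4]]. exists E. split; eauto.
  intros [E [[C1 [H1 H2]] H3]]. exists C1. split; auto. apply IHl1. eauto.
Qed.

Lemma gal_exists l C D : Forall S_ l -> wp l = delta C D -> gal C l D.
Proof.
  revert C. induction l as [|s l IH]; intros C F E; simpl in *.
  - symmetry in E. apply wd1 in E. auto.
  - inversion F; subst. destruct (wd3 C D s H1) as [C' [H3 H4]]. exists C'. split.
    apply adj_sym; auto. apply IH; auto. rewrite H4, <- E, (g_assoc HW), (s_ss W s H1), (g_1l HW). auto.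
Qed.

Lemma step_exists C s : S_ s -> exists C', delta C C' = s.
Proof. intro Hs. destruct (wd3 C C s Hs) as [C' [H _]]. exists C'. apply adj_sym; auto. Qed.

Lemma gal_chamber l C : Forall S_ l -> exists D, gal C l D.
Proof.
  revert C. induction l as [|s l IH]; intros C F. exists C. simpl; auto.
  inversion F; subst. destruct (step_exists C s H1) as [C' H]. destruct (IH C' H2) as [D HD].
  exists D. simpl. eauto.
Qed.

Lemma lemA l C D : reduced W l -> gal C l D -> delta C D = wp l.
Proof.
  revert C. induction l as [|s l IH]; intros C R G.
  - simpl in G. subst. apply wd1r.
  - simpl in G. destruct G as [C1 [H1 H2]]. change (s :: l) with ([s] ++ l) in R.
    pose proof (reduced_app W [s] l R) as [[Fs _] Rl]. pose proof (Forall_inv Fs) as H3.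
    pose proof (IH C1 Rl H2) as IH'. change (wp (s :: l)) with (s ** wp l). rewrite <- IH'.
    apply wd2b with (C := C1); auto. rewrite IH'.
    destruct R as [_ L]. destruct Rl as [_ L']. change (wp ([s] ++ l)) with (s ** wp l) in L. simpl in L. rewrite L, L'. auto.
Qed.

Lemma dist_exists C w : exists D, delta C D = w.
Proof.
  destruct (reduced_word W w) as [l [R E]]. destruct (gal_chamber l C (proj1 R)) as [D G].
  exists D. rewrite (lemA l C D R G). auto.
Qed.

Lemma gal_uniq l1 l2 C D E E' : reduced W (l1 ++ l2) -> gal C l1 E -> gal E l2 D ->
  gal C l1 E' -> gal E' l2 D -> E = E'.
Proof.
  revert C. induction l1 as [|s l1 IH]; intros C R G1 G2 G1' G2'; simpl in *.
  - subst; auto.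
  - destruct G1 as [C1 [H1 H2]]. destruct G1' as [C1' [H1' H2']].
    change (s :: l1 ++ l2) with ([s] ++ (l1 ++ l2)) in R.
    pose proof (reduced_app W [s] (l1 ++ l2) R) as [[Fs _] Rl]. pose proof (Forall_inv Fs) as H3.
    assert (C1 = C1').
    { destruct (classic (C1 = C1')) as [|N]; auto. exfalso.
      assert (A : adj0 s C1' C1).
      { apply adj0_trans with C; auto. apply adj0_sym; auto. right; auto. right; auto. }
      destruct A as [A|A]. apply wd1 in A. auto.
      assert (D1 : delta C1 D = wp (l1 ++ l2)) by (apply lemA; auto; apply gal_app; eauto).
      assert (D2 : delta C1' D = wp (l1 ++ l2)) by (apply lemA; auto; apply gal_app; eauto).
      assert (delta C1' D = s ** delta C1 D).
      { apply wd2b; auto. rewrite D1. destruct R as [_ L]. destruct Rl as [_ L']. simpl in L. rewrite L, L'. auto. }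
      rewrite D1, D2 in H. apply (s_ne1 W s H3). apply (g_cancr HW (wp (l1 ++ l2))). rewrite (g_1l HW). auto. }
    subst C1'. eapply IH; eauto.
Qed.

Lemma gal_refl_adj C C' s : gal C [s] C' <-> delta C C' = s.
Proof. simpl. split. intros [C1 [H ->]]; auto. intro; eauto. Qed.

Section Apt.
Variable w0 : W.
Hypothesis Hpre : forall x, len x + len (iv x ** w0) = len w0.
Hypothesis Hcases : forall w s, S_ s -> len (w ** s) = S (len w) \/ len w = S (len (w ** s)).
Variables c c' : Ch.
Hypothesis Hcc : delta c c' = w0.

Definition Pf x E := delta c E = x /\ delta E c' = iv x ** w0.

Lemma red_cat l1 l2 : reduced W l1 -> reduced W l2 -> len (wp l1 ** wp l2) = length l1 + length l2 ->
  reduced W (l1 ++ l2).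
Proof. intros [F1 _] [F2 _] L. split. apply Forall_app; auto. rewrite (word_prod_app HW), length_app. auto. Qed.

Lemma Pf_ex x : exists E, Pf x E.
Proof.
  destruct (reduced_word W x) as [lx [Rx Ex]]. destruct (reduced_word W (iv x ** w0)) as [ly [Ry Ey]].
  assert (R : reduced W (lx ++ ly)).
  { apply red_cat; auto. rewrite Ex, Ey, (g_Kr HW). destruct Rx as [_ Lx], Ry as [_ Ly].
    rewrite <- Lx, <- Ly, Ex, Ey. symmetry. apply Hpre. }
  assert (G : gal c (lx ++ ly) c').
  { apply gal_exists. apply R. rewrite (word_prod_app HW), Ex, Ey, (g_Kr HW). auto. }
  apply gal_app in G as [E [G1 G2]]. exists E. pose proof (reduced_app W lx ly R) as [R1 R2].
  split. rewrite (lemA lx c E R1 G1). auto. rewrite (lemA ly E c' R2 G2). auto.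
Qed.

Lemma Pf_uniq x E E' : Pf x E -> Pf x E' -> E = E'.
Proof.
  intros [H1 H2] [H1' H2'].
  destruct (reduced_word W x) as [lx [Rx Ex]]. destruct (reduced_word W (iv x ** w0)) as [ly [Ry Ey]].
  assert (R : reduced W (lx ++ ly)).
  { apply red_cat; auto. rewrite Ex, Ey, (g_Kr HW). destruct Rx as [_ Lx], Ry as [_ Ly].
    rewrite <- Lx, <- Ly, Ex, Ey. symmetry. apply Hpre. }
  apply (gal_uniq lx ly c c' E E' R); apply gal_exists; try apply Rx; try apply Ry; congruence.
Qed.

Definition fA (x : W) : Ch := proj1_sig (constructive_indefinite_description _ (Pf_ex x)).
Lemma fA_spec x : Pf x (fA x).
Proof. unfold fA. destruct (constructive_indefinite_description _ _). auto. Qed.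
Lemma fA_eq x E : Pf x E -> fA x = E.
Proof. intro H. apply (Pf_uniq x); auto. apply fA_spec. Qed.

Lemma fA_adj_up x s : S_ s -> len (x ** s) = S (len x) -> delta (fA x) (fA (x ** s)) = s.
Proof.
  intros Hs L.
  destruct (reduced_word W x) as [lx [Rx Ex]]. destruct (reduced_word W (iv (x ** s) ** w0)) as [ly [Ry Ey]].
  assert (Rxs : reduced W (lx ++ [s])).
  { apply red_cat; auto. split; auto. simpl. rewrite (g_1r HW), len_s; auto.
    simpl. rewrite (g_1r HW), Ex, L. destruct Rx as [_ Lx]. rewrite <- Ex, Lx. lia. }
  assert (R : reduced W ((lx ++ [s]) ++ ly)).
  { apply red_cat; auto. rewrite (word_prod_app HW), Ey, Ex. simpl. rewrite (g_1r HW), (g_Kr HW).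
    destruct Rxs as [_ L1], Ry as [_ L2]. rewrite <- L1, <- L2, Ey, (word_prod_app HW), Ex.
    simpl. rewrite (g_1r HW). symmetry. apply Hpre. }
  assert (G : gal c ((lx ++ [s]) ++ ly) c').
  { apply gal_exists. apply R. rewrite !(word_prod_app HW), Ex, Ey. simpl. rewrite (g_1r HW), (g_Kr HW). auto. }
  apply gal_app in G as [F [G1 G2]]. apply gal_app in G1 as [E [G0 G3]].
  pose proof (reduced_app W _ _ R) as [R1 R2]. pose proof (reduced_app W _ _ R1) as [R0 R3].
  assert (HE : fA x = E).
  { apply fA_eq. split. rewrite (lemA lx c E R0 G0). auto.
    assert (Rs : reduced W (s :: ly)).
    { change (s :: ly) with ([s] ++ ly). rewrite <- app_assoc in R. apply reduced_app in R. apply R. }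
    assert (GG : gal E (s :: ly) c') by (apply (gal_app [s] ly); eauto).
    rewrite (lemA _ E c' Rs GG). simpl. change (fold_right (cmul W) e ly) with (wp ly). rewrite Ey.
    rewrite (g_invM HW), (s_inv W s Hs), !(g_assoc HW), (s_ss W s Hs), (g_1l HW). auto. }
  assert (HF : fA (x ** s) = F).
  { apply fA_eq. split. rewrite (lemA _ c F R1). rewrite (word_prod_app HW), Ex. simpl. rewrite (g_1r HW). auto.
    apply gal_app. eauto. rewrite (lemA ly F c' R2 G2). auto. }
  rewrite HE, HF. apply gal_refl_adj. auto.
Qed.

Lemma fA_adj x s : S_ s -> delta (fA x) (fA (x ** s)) = s.
Proof.
  intro Hs. destruct (Hcases x s Hs) as [L|L]. apply fA_adj_up; auto.
  apply adj_sym; auto. assert (x ** s ** s = x) by (rewrite <- (g_assoc HW), (s_ss W s Hs), (g_1r HW); auto).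
  pose proof (fA_adj_up (x ** s) s Hs) as K. rewrite H in K. apply K. exact L.
Qed.

Lemma fA_gal l x : Forall S_ l -> gal (fA x) l (fA (x ** wp l)).
Proof.
  revert x. induction l as [|s l IH]; intros x F; simpl.
  rewrite (g_1r HW). auto. inversion F; subst. exists (fA (x ** s)). split. apply fA_adj; auto.
  change (fold_right (cmul W) e l) with (wp l). rewrite (g_assoc HW). apply IH; auto.
Qed.

Lemma fA_iso x y : delta (fA x) (fA y) = iv x ** y.
Proof.
  destruct (reduced_word W (iv x ** y)) as [l [R E]].
  pose proof (fA_gal l x (proj1 R)). rewrite E, (g_Kr HW) in H. rewrite (lemA l _ _ R H). auto.
Qed.

Lemma fA_1 : fA e = c.
Proof. apply fA_eq. split. apply wd1r. rewrite (g_inv1 HW), (g_1l HW). auto. Qed.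
End Apt.

Lemma apartment_adj (Hsph : spherical W) c d s : S_ s -> delta c d = s ->
  exists A, apartment W delta A /\ A c /\ A d.
Proof.
  intros Hs Hcd. destruct (coxeter_facts W Hsph) as [Hcases [w0 Hpre]].
  destruct (reduced_word W (s ** w0)) as [l0 [R0 E0]].
  destruct (gal_chamber l0 d (proj1 R0)) as [c' G0].
  assert (R : reduced W (s :: l0)).
  { split. constructor; auto. apply R0. simpl. change (fold_right (cmul W) e l0) with (wp l0).
    rewrite E0, (g_assoc HW), (s_ss W s Hs), (g_1l HW). destruct R0 as [_ L0]. rewrite <- L0, E0.
    pose proof (Hpre s). rewrite (s_inv W s Hs), (len_s W s Hs) in H. lia. }
  assert (Hcc : delta c c' = w0).
  { rewrite (lemA (s :: l0) c c' R). simpl. change (fold_right (cmul W) e l0) with (wp l0).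
    rewrite E0, (g_assoc HW), (s_ss W s Hs), (g_1l HW). auto. simpl. eauto. }
  exists (fun z => exists w, fA w0 Hpre c c' Hcc w = z). split.
  - exists (fA w0 Hpre c c' Hcc). split. intros; apply fA_iso; auto. tauto.
  - split. exists e. apply fA_1. exists s. apply fA_eq.
    split. auto. rewrite (s_inv W s Hs), (lemA l0 d c' R0 G0). auto.
Qed.

Lemma apt_uniq A x y z : apartment W delta A -> A x -> A y -> A z -> delta x y = delta x z -> y = z.
Proof.
  intros [f [Hf HA]] Hx Hy Hz E. apply HA in Hx as [a <-]. apply HA in Hy as [b <-]. apply HA in Hz as [c0 <-].
  rewrite !Hf in E. apply (g_cancl HW) in E. subst. auto.
Qed.

End Bld.

Lemma parab_s (W : CoxeterSystem) s w : cS W s ->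
  (in_parabolic W (fun x => x = s) w <-> w = cone W \/ w = s).
Proof.
  intro Hs. split.
  - intros [l [F E]]. subst w. induction l; simpl. auto. inversion F; subst.
    destruct (IHl H2) as [E|E]; change (fold_right (cmul W) (cone W) l) with (word_prod (cmul W) (cone W) l); rewrite E.
    right. apply (g_1r (c_group W)). left. apply (s_ss W s Hs).
  - intros [->| ->]. exists []. auto. exists [s]. split; auto. simpl. apply (g_1r (c_group W)).
Qed.

Lemma parab_0 (W : CoxeterSystem) w : in_parabolic W (fun _ => False) w <-> w = cone W.
Proof.
  split. intros [l [F E]]. destruct l. auto. inversion F; contradiction.
  intros ->. exists []. auto.
Qed.


Section Top.
Variable G : TopGroup.
Local Notation "x * y" := (tmul G x y).
Local Notation iv := (tinv G).
Local Notation HG := (t_group G).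
Local Notation op := (topen G).

Lemma topen_ext (P Q : G -> Prop) : (forall x, P x <-> Q x) -> op P -> op Q.
Proof.
  intros H O. replace Q with P; auto. apply functional_extensionality. intro x. apply propositional_extensionality. auto.
Qed.

Lemma open_local (P : G -> Prop) :
  (forall x, P x -> exists V, op V /\ V x /\ forall y, V y -> P y) -> op P.
Proof.
  intro H.
  pose (I := {V : G -> Prop | op V /\ forall y, V y -> P y}).
  apply (topen_ext (fun x => exists i : I, proj1_sig i x)).
  - intro x. split. intros [i Hx]. destruct i as [V [O HV]]. simpl in Hx. auto.
    intro Px. destruct (H x Px) as [V [O [Vx HV]]]. exists (exist _ V (conj O HV)). simpl. auto.
  - apply t_open_union. intros [V [O HV]]. simpl. auto.
Qed.

Lemma open_transl (U : G -> Prop) g : op U -> op (fun x => U (g * x)).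
Proof.
  intro O. apply open_local. intros x Ux.
  destruct (t_mul_cont G U g x O Ux) as [A [B [OA [OB [Ag [Bx HAB]]]]]].
  exists B. split; auto.
Qed.

Lemma closed_transl (F : G -> Prop) g : tclosed G F -> tclosed G (fun x => F (g * x)).
Proof. intro C. unfold tclosed in *. apply (open_transl (fun x => ~ F x)). auto. Qed.

Fixpoint Vl {J : Type} (f : J -> G -> Prop) (l : list (option J)) : G -> Prop :=
  match l with
  | [] => fun _ => True
  | i :: l' => fun y => (match i with None => True | Some j => f j y end) /\ Vl f l' y
  end.

Lemma Vl_open J f l : (forall j : J, op (f j)) -> op (Vl f l).
Proof.
  intro H. induction l as [|[j|] l IH]; simpl. apply t_open_full.
  apply t_open_inter; auto. apply t_open_inter; auto. apply t_open_full.
Qed.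
Lemma Vl_all (J : Type) (f : J -> G -> Prop) l y : (forall j : J, In (Some j) l -> f j y) -> Vl f l y.
Proof.
  induction l as [|[j|] l IH]; simpl; intros H. auto.
  split. apply H; auto. apply IH. intros; apply H; auto.
  split; [auto| try (apply IH; intros; apply H; auto)].
Qed.
Lemma Vl_in (J : Type) (f : J -> G -> Prop) l y j : Vl f l y -> In (Some j) l -> f j y.
Proof.
  induction l as [|[j'|] l IH]; simpl; intros H1 H2. contradiction.
  destruct H2 as [H2|H2]. inversion H2; subst. tauto. apply IH; tauto.
  destruct H2 as [H2|H2]. discriminate. apply IH; tauto.
Qed.

Lemma prod_closed (K F : G -> Prop) : compact G -> tclosed G K -> tclosed G F ->
  tclosed G (fun y => exists k f, K k /\ F f /\ y = k * f).
Proof.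
  intros Cp CK CF. unfold tclosed. apply open_local. intros h NX.
  pose (J := {p : (G -> Prop) * (G -> Prop) | op (fst p) /\ op (snd p) /\ snd p h /\
              forall a b, fst p a -> snd p b -> ~ F (iv a * b)}).
  pose (U := fun (i : option J) => match i with None => fun x => ~ K x | Some j => fst (proj1_sig j) end).
  destruct (Cp (option J) U) as [l Hl].
  - intros [j|]; simpl. destruct j as [p [H1 H2]]. auto. apply CK.
  - intro x. destruct (classic (K x)) as [Kx|NK]; [|exists None; simpl; auto].
    assert (NF : ~ F (iv x * h)).
    { intro Fx. apply NX. exists x, (iv x * h). split; auto. split; auto. rewrite (g_Kr HG). auto. }
    destruct (t_mul_cont G (fun z => ~ F z) (iv x) h CF NF) as [A [B [OA [OB [Ax [Bh HAB]]]]]].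
    assert (Hj : op (fun a => A (iv a)) /\ op B /\ B h /\ forall a b, A (iv a) -> B b -> ~ F (iv a * b)).
    { split. apply (t_inv_cont G A OA). split; auto. }
    exists (Some (exist _ ((fun a => A (iv a)), B) Hj)). unfold U. simpl. auto.
  - exists (Vl (fun j : J => snd (proj1_sig j)) l). split. apply Vl_open. intros [p [Q1 [H Q2]]]. auto.
    split. apply Vl_all. intros [p [Q1 [Q2 [H Q3]]]] _. auto.
    intros y Vy [k [f [Kk [Ff ->]]]]. destruct (Hl k) as [[j|] [Hin Uk]]; unfold U in Uk; simpl in Uk; [|contradiction].
    pose proof (proj2 (proj2 (proj2 (proj2_sig j)))) as Hp.
    pose proof (Vl_in _ _ l _ _ Vy Hin) as H. simpl in H. apply (Hp k (k * f) Uk H). rewrite (g_Kl HG). auto.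
Qed.

Lemma finite_cosets (P U : G -> Prop) : compact G -> tclosed G P -> op U -> U (tone G) ->
  exists lp, (forall p, In p lp -> P p) /\ forall q, P q -> exists p, In p lp /\ U (iv p * q).
Proof.
  intros Cp CP OU U1.
  pose (I := {p | P p}).
  pose (V := fun (i : option I) => match i with None => fun x => ~ P x | Some p => fun x => U (iv (proj1_sig p) * x) end).
  destruct (Cp (option I) V) as [l Hl].
  - intros [p|]; simpl. apply open_transl; auto. apply CP.
  - intro x. destruct (classic (P x)) as [Px|NP]; [|exists None; simpl; auto].
    exists (Some (exist _ x Px)). simpl. rewrite (g_vl HG). auto.
  - exists (flat_map (fun i : option I => match i with Some p => [proj1_sig p] | None => [] end) l). split.
    + intros p Hp. apply in_flat_map in Hp as [[[p' Hp']|] [_ H]]; simpl in H; [|contradiction].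
      destruct H as [<-|[]]. auto.
    + intros q Pq. destruct (Hl q) as [[[p Pp]|] [Hin Vq]]; simpl in Vq; [|contradiction].
      exists p. split; auto. apply in_flat_map. exists (Some (exist _ p Pp)). simpl. auto.
Qed.
End Top.


Section Main.
Variables (G : TopGroup) (W : CoxeterSystem) (Ch : Type) (delta : Ch -> Ch -> W) (act : G -> Ch -> Ch).
Hypothesis HB : is_building W delta.
Hypothesis Hsph : spherical W.
Hypothesis Hth : thick W delta.
Hypothesis Hcp : compact G.
Hypothesis Hact : type_preserving_action G W delta act.
Hypothesis Hcont : continuous_action G W delta act.
Hypothesis Hst : strongly_transitive G W delta act.
Local Notation "x * y" := (tmul G x y).
Local Notation ivg := (tinv G).
Local Notation HG := (t_group G).
Local Notation HW := (c_group W).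
Local Notation e := (cone W).
Local Notation S_ := (cS W).

Lemma act1 x : act (tone G) x = x. Proof. apply Hact. Qed.
Lemma actM g h x : act (g * h) x = act g (act h x). Proof. apply Hact. Qed.
Lemma dpres g x y : delta (act g x) (act g y) = delta x y. Proof. apply Hact. Qed.
Lemma act_iv g x : act (ivg g) (act g x) = x.
Proof. rewrite <- actM, (g_vl HG), act1. auto. Qed.
Lemma act_iv' g x : act g (act (ivg g) x) = x.
Proof. rewrite <- actM, (g_vr HG), act1. auto. Qed.

Lemma closed_ext (P Q : G -> Prop) : (forall g, P g <-> Q g) -> tclosed G P -> tclosed G Q.
Proof. intros H C. unfold tclosed in *. apply (topen_ext G (fun x => ~ P x)); auto. intro; rewrite H; tauto. Qed.

Lemma K_closed c : tclosed G (fun g => act g c = c).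
Proof.
  assert (R : is_residue W delta (fun d => delta c d = e)).
  { exists (fun _ => False), c. split. tauto. intro d. unfold residue. rewrite parab_0. tauto. }
  apply (closed_ext (fun g => maps_set G act g (fun d => delta c d = e) (fun d => delta c d = e))).
  - intro g. unfold maps_set. split.
    + intro H. assert (Y : delta c (act g c) = e).
      { apply (H (act g c)). exists c. split; auto. apply wd1r; auto. }
      apply wd1 in Y; auto.
    + intros H y. split. intro Hy. exists c. split. apply wd1r; auto. apply wd1 in Hy; auto. rewrite H. auto.
      intros [x [Hx <-]]. apply wd1 in Hx; auto. subst x. rewrite H. apply wd1r; auto.
  - apply Hcont. auto.
Qed.

Lemma stab_iff s c g : S_ s ->
  (maps_set G act g (adj0 W Ch delta s c) (adj0 W Ch delta s c) <-> adj0 W Ch delta s c (act g c)).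
Proof.
  intro Hs. unfold maps_set. split.
  - intro H. apply H. exists c. split; auto. left. apply wd1r; auto.
  - intros H y. split.
    + intro Hy. exists (act (ivg g) y). split; [|apply act_iv'].
      unfold adj0. rewrite <- (dpres g), act_iv'. fold (adj0 W Ch delta s (act g c) y).
      apply adj0_trans with c; auto. apply adj0_sym; auto.
    + intros [x [Hx <-]]. apply adj0_trans with (act g c); auto. unfold adj0. rewrite dpres. auto.
Qed.

Lemma res_closed s c : S_ s -> tclosed G (fun g => adj0 W Ch delta s c (act g c)).
Proof.
  intro Hs. apply (closed_ext (fun g => maps_set G act g (adj0 W Ch delta s c) (adj0 W Ch delta s c))).
  intro g. apply stab_iff; auto. apply Hcont.
  exists (fun x => x = s), c. split. intros; subst; auto. intro d. unfold residue. rewrite parab_s; auto. unfold adj0. tauto.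
Qed.

Lemma panel_finite c s : S_ s -> exists L, forall d, delta c d = s -> In d L.
Proof.
  intro Hs. destruct (Hth c s Hs) as [e0 [_ [He0 _]]].
  destruct (apartment_adj W Ch delta HB Hsph c e0 s Hs He0) as [A0 [HA0 [A0c A0e]]].
  destruct (Hst A0 A0 c e0 HA0 HA0 A0c A0e) as [g0 [_ Hg0]].
  set (K := fun g => act g c = c).
  set (F := fun f => K (ivg g0 * f)).
  set (X := fun y => exists k f, K k /\ F f /\ y = k * f).
  assert (CX : tclosed G X).
  { apply prod_closed; auto. apply K_closed. apply (closed_transl G K). apply K_closed. }
  assert (X1 : forall g, delta c (act g c) = s -> X g).
  { intros g Hg. destruct (apartment_adj W Ch delta HB Hsph c (act g c) s Hs Hg) as [A1 [HA1 [A1c A1e]]].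
    destruct (Hst A0 A1 c c HA0 HA1 A0c A1c) as [b [Mb Hb]].
    assert (E : act b e0 = act g c).
    { apply (apt_uniq W Ch delta A1 c); auto. apply Mb. eauto. rewrite <- Hb at 1. rewrite dpres, He0. auto. }
    exists b, (ivg b * g). split. auto. split.
    - unfold F, K. rewrite !actM, <- E, act_iv, <- Hg0, act_iv. auto.
    - rewrite (g_Kr HG). auto. }
  assert (X2 : forall g, X g -> delta c (act g c) = s).
  { intros g [k [f [Kk [Ff ->]]]]. unfold F, K in *. rewrite actM in Ff.
    assert (act f c = e0) by (apply (f_equal (act g0)) in Ff; rewrite act_iv' in Ff; rewrite Ff; auto).
    rewrite actM, H, <- Kk at 1. rewrite dpres. auto. }
  assert (U1 : ~ X (tone G)).
  { intro H. apply X2 in H. rewrite act1, wd1r in H; auto. apply (s_ne1 W s Hs). auto. }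
  destruct (finite_cosets G _ (fun g => ~ X g) Hcp (res_closed s c Hs) CX U1) as [lp [Hlp1 Hlp2]].
  exists (map (fun p => act p c) lp). intros d Hd.
  destruct (apartment_adj W Ch delta HB Hsph c d s Hs Hd) as [A1 [HA1 [A1c A1d]]].
  destruct (Hst A1 A1 c d HA1 HA1 A1c A1d) as [g [_ Hg]].
  assert (Sg : adj0 W Ch delta s c (act g c)) by (rewrite Hg; right; auto).
  destruct (Hlp2 g Sg) as [p [Hp NX]]. apply in_map_iff. exists p. split; auto.
  pose proof (Hlp1 p Hp) as Sp.
  assert (Q : adj0 W Ch delta s c (act (ivg p * g) c)).
  { unfold adj0. rewrite <- (dpres p), actM, act_iv'. fold (adj0 W Ch delta s (act p c) (act g c)).
    apply adj0_trans with c; auto. apply adj0_sym; auto. }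
  destruct Q as [Q|Q].
  - apply wd1 in Q; auto. rewrite <- Hg. rewrite Q at 1. rewrite actM, act_iv'. auto.
  - exfalso. apply NX. apply X1. auto.
Qed.

Lemma list_combine (A B : Type) (P : A -> list B -> Prop) (l : list A) :
  (forall x, In x l -> exists L, P x L) -> exists LL : list (A * list B), forall x, In x l -> exists L, In (x, L) LL /\ P x L.
Proof.
  induction l as [|a l IH]; intro H. exists []. intros x [].
  destruct (H a (or_introl eq_refl)) as [La Ha]. edestruct IH as [LL HLL]; [intros x Hx; apply H; simpl; auto|].
  exists ((a, La) :: LL). intros x [<-|Hx]. exists La; simpl; auto.
  destruct (HLL x Hx) as [L [H1 H2]]. exists L. simpl; auto.
Qed.

Lemma reach l : Forall S_ l -> forall c, exists L, forall d, delta c d = word_prod (cmul W) e l -> In d L.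
Proof.
  induction l as [|s l IH]; intros F c.
  - exists [c]. intros d Hd. simpl in Hd. apply wd1 in Hd; auto. subst. simpl; auto.
  - inversion F; subst. destruct (panel_finite c s H1) as [Es HEs].
    destruct (list_combine Ch Ch (fun x L => forall d, delta x d = word_prod (cmul W) e l -> In d L) Es)
      as [LL HLL]. intros; apply IH; auto.
    exists (flat_map snd LL). intros d Hd.
    destruct (wd3 W Ch delta HB c d s H1) as [C' [H3 H4]].
    assert (InC : In C' Es) by (apply HEs; apply adj_sym; auto).
    destruct (HLL C' InC) as [L [H5 H6]]. apply in_flat_map. exists (C', L). split; auto. simpl.
    apply H6. rewrite H4, Hd. simpl. rewrite (g_assoc HW), (s_ss W s H1), (g_1l HW). auto.
Qed.

Theorem finite_main : exists l : list Ch, forall c : Ch, In c l.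
Proof.
  destruct HB as [[c0 _] _]. destruct Hsph as [lw Hlw].
  destruct (list_combine W Ch (fun w L => forall d, delta c0 d = w -> In d L) lw) as [LL HLL].
  - intros w _. destruct (c_gen W w) as [l [F E]]. destruct (reach l F c0) as [L HL].
    exists L. intros d Hd. apply HL. rewrite Hd. auto.
  - exists (flat_map snd LL). intro d. destruct (HLL (delta c0 d) (Hlw _)) as [L [H1 H2]].
    apply in_flat_map. exists (delta c0 d, L). split; auto.
Qed.
End Main.

Theorem mainTheorem7 (G : TopGroup) (W : CoxeterSystem) (Ch : Type)
  (delta : Ch -> Ch -> W) (act : G -> Ch -> Ch) :
  @is_building W Ch delta -> spherical W -> @thick W Ch delta ->
  compact G ->
  @type_preserving_action G W Ch delta act ->
  @continuous_action G W Ch delta act ->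
  @strongly_transitive G W Ch delta act ->
  exists l : list Ch, forall c : Ch, In c l.
Proof.
  intros. eapply finite_main; eauto.
Qed.
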